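(* (i) Fix an initial surplus $x>0$. For any fixed $\underline{x}\ge0$, the map $\bar{x}\mapsto R(x;\underline{x},\bar{x})$ (on $\bar{x}>\underline{x}$) is continuous and strictly decreasing with $\lim_{\bar{x}\to\infty}R(x;\underline{x},\bar{x})=0$. For any fixed $\bar{x}>0$, the map $\underline{x}\mapsto R(x;\underline{x},\bar{x})$ (on $0\le\underline{x}<\bar{x}$) is continuous and strictly increasing with $\lim_{\underline{x}\to\bar{x}}R(x;\underline{x},\bar{x})=\infty$. (ii) For any fixed $\underline{x}>0$, the map $\bar{x}\mapsto R(\bar{x};\underline{x},\bar{x})$ is continuous and strictly decreasing with $\lim_{\bar{x}\to\infty}R(\bar{x};\underline{x},\bar{x})=1$; and $R(\bar{x};0,\bar{x})=1$ for every $\bar{x}>0$.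
   Context: Fix $r>0$ and $\mu,\sigma:\mathbb{R}\to\mathbb{R}$ satisfying: (A.1) $\mu,\sigma$ are continuously differentiable and Lipschitz continuous, and $\mu',\sigma'$ are Lipschitz continuous; (A.2) $\sigma^2(x)>0$ for $x\ge0$; (A.3) $\mu'(x)<r$ for $x\ge0$; (A.4) there are $\varepsilon>0$, $x_a\ge0$ with $\mu'(x)<r-\varepsilon$ for $x\ge x_a$; (A.5) $\mu(0)>0$. The surplus process satisfies $dX_t=\mu(X_t)dt+\sigma(X_t)dW_t-dD_t$, $X_0=x$, under $\mathbb{P}_x$ ($W$ a Wiener process, $D$ the cumulative dividends), with bankruptcy time $\tau=\inf\{t\ge0:X_t\le0\}$. For an impulse dividend policy $S=(\tau_n,\zeta_n)_{n\ge1}$ ($\tau_n$ increasing stopping times tending to $\infty$, $\zeta_n\in(0,X_{\tau_n}]$ the $n$-th dividend paid at $\tau_n$), $R(x;S)=\mathbb{E}_x\big(\sum_{n:\tau_n\le\tau}e^{-r\tau_n}\big)$. For $\bar{x}>\underline{x}\ge0$, the constant lump sum dividend barrier policy $(\underline{x},\bar{x})$ pays a dividend $\bar{x}-\underline{x}$ each time $X$ reaches $\bar{x}$ (i.e. $\tau_1=\inf\{t>0:X_t\ge\bar{x}\}$, $\tau_n=\inf\{t>\tau_{n-1}:X_t\ge\bar{x}\}$), and additionally, if the initial surplus $x\ge\bar{x}$, a dividend $x-\underline{x}$ at time $0$; $R(x;\underline{x},\bar{x})$ is $R$ for this policy. One has $R(x;\underline{x},\bar{x})=g(x)/(g(\bar{x})-g(\underline{x}))$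 for $0\le x\le\bar{x}$, where $g$ is a canonical solution: $g\in C^2(0,\infty)$, $\mu g'+\frac12\sigma^2g''=rg$ on $(0,\infty)$, $g(0)=0$, $g'(0)>0$. *)

(* Defs.v *)
From Stdlib Require Import Reals Lra.
From Coquelicot Require Import Coquelicot.
Open Scope R_scope.

Definition Lipschitz (f : R -> R) : Prop :=
  exists L : R, forall x y : R, Rabs (f x - f y) <= L * Rabs (x - y).

Definition standing_assumptions (r : R) (mu sigma : R -> R) : Prop :=
  (forall x, ex_derive mu x) /\ (forall x, continuous (Derive mu) x) /\
  (forall x, ex_derive sigma x) /\ (forall x, continuous (Derive sigma) x) /\
  Lipschitz mu /\ Lipschitz sigma /\
  Lipschitz (Derive mu) /\ Lipschitz (Derive sigma) /\
  (forall x, 0 <= x -> 0 < sigma x ^ 2) /\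
  (forall x, 0 <= x -> Derive mu x < r) /\
  (exists eps xa, 0 < eps /\ 0 <= xa /\
     forall x, xa <= x -> Derive mu x < r - eps) /\
  0 < mu 0.

Definition canonical_solution (r : R) (mu sigma g : R -> R) : Prop :=
  (forall x, 0 < x ->
     ex_derive g x /\ ex_derive (Derive g) x /\
     continuous (Derive (Derive g)) x /\
     mu x * Derive g x + / 2 * sigma x ^ 2 * Derive (Derive g) x = r * g x) /\
  g 0 = 0 /\
  exists d : R, 0 < d /\
    filterlim (fun h => (g h - g 0) / h) (at_right 0) (locally d).

(** Expected discounted number of dividends R(x; lo, hi) of the constant lump
    sum dividend barrier policy (lo, hi), expressed through the canonical
    solution g.  For x > hi a dividend x - lo is paid at time 0 and the surplus
    restarts at lo, so R(x) = 1 + R(lo) = 1 + g(lo)/(g(hi)-g(lo)). *)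
Definition R_barrier (g : R -> R) (x lo hi : R) : R :=
  if Rle_dec x hi then g x / (g hi - g lo)
  else 1 + g lo / (g hi - g lo).

(* Main.v *)
Require Import Defs.
From Stdlib Require Import Reals Lra.
From Coquelicot Require Import Coquelicot.
Open Scope R_scope.

Lemma loc_intro (x:R) (P:R->Prop) d : 0<d -> (forall y, Rabs (y-x) < d -> P y) -> locally x P.
Proof. intros Hd H. exists (mkposreal d Hd). intros y Hy. apply H. exact Hy. Qed.
Lemma loc_elim (x:R) (P:R->Prop) : locally x P -> exists d, 0<d /\ forall y, Rabs (y-x) < d -> P y.
Proof. intros [e He]. exists e. split. apply cond_pos. intros y Hy. apply He. exact Hy. Qed.
Lemma ball_R (x e y : R) : ball x e y <-> Rabs (y - x) < e.
Proof. reflexivity. Qed.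
Lemma deriv_sign f p l : is_derive f p l -> 0 < l -> exists d, 0<d /\ forall s, 0<s<d -> f (p-s) < f p /\ f p < f (p+s).
Proof.
intros H Hl. apply is_derive_Reals in H. destruct (H l Hl) as [del Hd].
exists del. split. apply cond_pos. intros s Hs. split.
- assert (h1 : -s <> 0) by lra. assert (h2 : Rabs (-s) < del) by (rewrite Rabs_Ropp, Rabs_right; lra).
  specialize (Hd (-s) h1 h2). set (q := (f (p + - s) - f p) / - s) in Hd.
  assert (E : f (p + -s) - f p = q * (-s)) by (unfold q; field; lra).
  apply Rabs_def2 in Hd. replace (p - s) with (p + - s) by ring. nra.
- assert (h1 : s <> 0) by lra. assert (h2 : Rabs s < del) by (rewrite Rabs_right; lra).
  specialize (Hd s h1 h2). set (q := (f (p + s) - f p) / s) in Hd.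
  assert (E : f (p + s) - f p = q * s) by (unfold q; field; lra).
  apply Rabs_def2 in Hd. nra.
Qed.
Lemma deriv_sign_neg f p l : is_derive f p l -> l < 0 -> exists d, 0<d /\ forall s, 0<s<d -> f p < f (p-s) /\ f (p+s) < f p.
Proof.
intros H Hl. assert (H' : is_derive (fun y => - f y) p (- l)) by (apply is_derive_Reals in H; apply is_derive_Reals; exact (derivable_pt_lim_opp f p l H)).
destruct (deriv_sign _ _ _ H') as [d [Hd Hs]]; [lra|]. exists d. split; auto.
intros s Hs'. destruct (Hs s Hs'). split; lra.
Qed.

Definition ODEH (r : R) (mu sigma g : R -> R) := forall x, 0 < x ->
     ex_derive g x /\ ex_derive (Derive g) x /\
     continuous (Derive (Derive g)) x /\
     mu x * Derive g x + / 2 * sigma x ^ 2 * Derive (Derive g) x = r * g x.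

Lemma cont_pt_of (f : R -> R) x : ex_derive f x -> continuity_pt f x.
Proof. intro H. apply continuity_pt_filterlim. exact (ex_derive_continuous f x H). Qed.



Lemma g2_pos r mu sigma g p : 0 < r -> (forall x, 0<=x -> 0 < sigma x ^ 2) -> ODEH r mu sigma g ->
  0 < p -> 0 < g p -> Derive g p = 0 -> 0 < Derive (Derive g) p.
Proof.
intros Hr Hs H Hp Hg Hd. destruct (H p Hp) as [_ [_ [_ E]]].
assert (S := Hs p (Rlt_le _ _ Hp)). rewrite Hd in E.
assert (0 < r * g p) by nra. nra.
Qed.

Lemma no_int_max r mu sigma g a b p : 0 < r -> (forall x, 0<=x -> 0 < sigma x ^ 2) -> ODEH r mu sigma g ->
  0 <= a -> a < p -> p < b -> 0 < g p -> (forall y, a < y < b -> g y <= g p) -> False.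
Proof.
intros Hr Hs H Ha Hap Hpb Hg Hmax.
assert (Hp : 0 < p) by lra.
destruct (H p Hp) as [Dg [DDg _]].
assert (Z : Derive g p = 0).
{ destruct (Rtotal_order (Derive g p) 0) as [N|[Z|P]]; auto.
  - destruct (deriv_sign_neg _ _ _ (Derive_correct _ _ Dg) N) as [d [Hd Hs']].
    set (s := Rmin d (p - a) / 2).
    assert (0 < s < d /\ a < p - s < b) by (unfold s, Rmin; destruct Rle_dec; lra).
    destruct (Hs' s) as [A1 _]; [tauto|]. specialize (Hmax (p - s)). lra.
  - destruct (deriv_sign _ _ _ (Derive_correct _ _ Dg) P) as [d [Hd Hs']].
    set (s := Rmin d (b - p) / 2).
    assert (0 < s < d /\ a < p + s < b) by (unfold s; unfold Rmin; destruct Rle_dec; lra).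
    destruct (Hs' s) as [_ A1]; [tauto|]. specialize (Hmax (p + s)). lra. }
assert (P2 := g2_pos _ _ _ _ _ Hr Hs H Hp Hg Z).
destruct (deriv_sign _ _ _ (Derive_correct _ _ DDg) P2) as [d [Hd Hs']].
set (e := Rmin d (b - p)).
assert (He : 0 < e /\ e <= d /\ e <= b - p) by (unfold e, Rmin; destruct Rle_dec; lra).
assert (Pos : forall t, p < t < p + e -> 0 < Derive g t).
{ intros t Ht. destruct (Hs' (t - p)) as [_ A1]; [lra|]. rewrite Z in A1.
  replace (p + (t - p)) with t in A1 by ring. exact A1. }
assert (Ge : forall t, p < t < p + e -> g p <= g t).
{ intros t Ht. destruct (MVT_gen g p t (Derive g)) as [c [Hc Ec]].
  - intros x Hx. rewrite Rmin_left in Hx by lra. rewrite Rmax_right in Hx by lra.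
    apply Derive_correct. apply H. lra.
  - intros x Hx. rewrite Rmin_left in Hx by lra. rewrite Rmax_right in Hx by lra.
    apply cont_pt_of. apply H. lra.
  - rewrite Rmin_left in Hc by lra. rewrite Rmax_right in Hc by lra.
    destruct (Req_dec c p) as [->|Hcp].
    + rewrite Z in Ec. lra.
    + assert (0 < Derive g c) by (apply Pos; lra). nra. }
set (t1 := p + e / 2).
assert (T1 : 0 < Derive g t1) by (apply Pos; unfold t1; lra).
assert (Ht1 : 0 < t1) by (unfold t1; lra).
destruct (deriv_sign _ _ _ (Derive_correct _ _ (proj1 (H t1 Ht1))) T1) as [d2 [Hd2 Hs2]].
set (s := Rmin d2 (e/2) / 2).
assert (0 < s < d2 /\ s < e / 2) by (unfold s, Rmin; destruct Rle_dec; lra).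
destruct (Hs2 s) as [_ A1]; [lra|].
assert (g p <= g t1) by (apply Ge; unfold t1; lra).
assert (g (t1 + s) <= g p) by (apply Hmax; unfold t1 in *; lra).
lra.
Qed.
Lemma near0 (g : R -> R) d : 0<d -> filterlim (fun h => (g h - g 0) / h) (at_right 0) (locally d) -> g 0 = 0 ->
  exists del, 0<del /\ forall h, 0<h<del -> d/2*h < g h < 3*d/2*h.
Proof.
intros Hd Hl G0.
assert (Hd2 : 0 < d/2) by lra.
pose proof (proj1 (filterlim_locally _ _) Hl (mkposreal _ Hd2)) as H.
unfold at_right, within in H. apply loc_elim in H. destruct H as [del [Hdel H]].
exists del. split; auto. intros h Hh.
assert (B : Rabs (h - 0) < del) by (rewrite Rabs_right; lra).
specialize (H h B (proj1 Hh)). apply ball_R in H. simpl in H. rewrite G0 in H.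
set (q := (g h - 0) / h) in H.
assert (E : g h = q * h) by (unfold q; field; lra).
apply Rabs_def2 in H. destruct H as [H1 H2]. rewrite E. destruct Hh as [Hh1 Hh2]. unfold minus, plus, opp in H1, H2; simpl in H1, H2. split; nra.
Qed.

Lemma small_eps (g : R -> R) d del : 0<d -> 0<del -> (forall h, 0<h<del -> d/2*h < g h < 3*d/2*h) ->
  forall c, 0 < c -> 0 < g c -> exists e, 0 < e < c /\ g e < g c.
Proof.
intros Hd Hdel H c Hc Gc.
set (e := Rmin (Rmin (c/2) (del/2)) (g c / (2*d))).
assert (He1 : e <= c/2 /\ e <= del/2 /\ e <= g c / (2*d)) by (unfold e, Rmin; repeat destruct Rle_dec; lra).
assert (He2 : 0 < e) by (unfold e, Rmin; repeat destruct Rle_dec; try lra; apply Rdiv_lt_0_compat; lra).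
exists e. split; [lra|].
destruct (H e) as [_ U]; [lra|].
assert (3*d/2*e <= 3*d/2*(g c/(2*d))) by (apply Rmult_le_compat_l; lra).
assert (3*d/2*(g c/(2*d)) = 3/4 * g c) by (field; lra). lra.
Qed.

Lemma max_lemma (g : R -> R) e c b : 0 < e -> e < c -> c < b -> g e < g c -> g b <= g c ->
  (forall x, e <= x <= b -> continuity_pt g x) ->
  exists p, e < p < b /\ g c <= g p /\ forall y, e < y < b -> g y <= g p.
Proof.
intros He Hec Hcb H1 H2 Hc.
destruct (continuity_ab_maj g e b) as [M [HM HMi]]; [lra|exact Hc|].
assert (Gc : g c <= g M) by (apply HM; lra).
destruct (Req_dec M e) as [->|Ne]; [lra|].
destruct (Req_dec M b) as [->|Nb].
- exists c. split; [lra|]. split; [lra|]. intros y Hy. assert (g y <= g b) by (apply HM; lra). lra.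
- exists M. split; [lra|]. split; [lra|]. intros y Hy. apply HM; lra.
Qed.

Lemma g_facts r mu sigma g d del : 0 < r -> (forall x, 0<=x -> 0 < sigma x ^ 2) -> ODEH r mu sigma g ->
  0<d -> 0<del -> (forall h, 0<h<del -> d/2*h < g h < 3*d/2*h) ->
  (forall x, 0 < x -> 0 < g x) /\ (forall a b, 0 < a -> a < b -> g a < g b).
Proof.
intros Hr Hs H Hd Hdel Hn.
assert (Cont : forall x, 0 < x -> continuity_pt g x) by (intros x Hx; apply cont_pt_of; apply H; exact Hx).
assert (Pos : forall x, 0 < x -> 0 < g x).
{ intros x Hx. destruct (Rlt_or_le 0 (g x)) as [P|N]; auto. exfalso.
  set (c := Rmin x del / 2).
  assert (Hc : 0 < c /\ c < x /\ c < del) by (unfold c, Rmin; destruct Rle_dec; lra).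
  assert (Gc : 0 < g c) by (destruct (Hn c) as [A _]; [lra|]; nra).
  destruct (small_eps g d del Hd Hdel Hn c (proj1 Hc) Gc) as [e [He Ge]].
  destruct (max_lemma g e c x) as [p [Hp1 [Hp2 Hp3]]]; try lra.
  { intros y Hy. apply Cont. lra. }
  apply (no_int_max r mu sigma g e x p); auto; lra. }
split; auto.
intros a b Ha Hab. destruct (Rlt_or_le (g a) (g b)) as [P|N]; auto. exfalso.
destruct (small_eps g d del Hd Hdel Hn a Ha (Pos a Ha)) as [e [He Ge]].
destruct (max_lemma g e a b) as [p [Hp1 [Hp2 Hp3]]]; try lra.
{ intros y Hy. apply Cont. lra. }
assert (0 < g a) by (apply Pos; lra).
apply (no_int_max r mu sigma g e b p); auto; lra.
Qed.

Lemma gprime_pos r mu sigma g : 0 < r -> (forall x, 0<=x -> 0 < sigma x ^ 2) -> ODEH r mu sigma g ->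
  (forall x, 0 < x -> 0 < g x) -> (forall a b, 0 < a -> a < b -> g a < g b) ->
  forall x, 0 < x -> 0 < Derive g x.
Proof.
intros Hr Hs H Pos Inc.
assert (Nn : forall x, 0 < x -> 0 <= Derive g x).
{ intros x Hx. destruct (Rlt_or_le (Derive g x) 0) as [N|P]; auto. exfalso.
  destruct (deriv_sign_neg _ _ _ (Derive_correct _ _ (proj1 (H x Hx))) N) as [dd [Hdd Hs']].
  destruct (Hs' (dd/2)) as [_ A]; [lra|]. assert (g x < g (x + dd/2)) by (apply Inc; lra). lra. }
intros x Hx. destruct (Nn x Hx) as [P|Z]; auto. exfalso.
assert (P2 := g2_pos _ _ _ _ _ Hr Hs H Hx (Pos x Hx) (eq_sym Z)).
destruct (deriv_sign _ _ _ (Derive_correct _ _ (proj1 (proj2 (H x Hx)))) P2) as [dd [Hdd Hs']].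
set (s := Rmin dd x / 2).
assert (0 < s < dd /\ s < x) by (unfold s, Rmin; destruct Rle_dec; lra).
destruct (Hs' s) as [A _]; [lra|]. assert (0 <= Derive g (x - s)) by (apply Nn; lra). lra.
Qed.
Lemma dphi (g : R -> R) x : ex_derive g x -> ex_derive (Derive g) x -> is_derive (fun y => (1+y) * Derive g y) x (Derive g x + (1+x) * Derive (Derive g) x).
Proof. intros. auto_derive. auto. change (fun x0 => Derive g x0) with (Derive g). ring. Qed.
Lemma dh (g : R -> R) x m : 0 < x -> ex_derive g x -> is_derive (fun y => g y - m * ln (1+y)) x (Derive g x - m / (1+x)).
Proof. intros. auto_derive. split; auto. split; auto. lra. change (fun x0 => g x0) with g. field. lra. Qed.

Lemma g_unbounded r mu sigma g : 0 < r -> (forall x, 0<=x -> 0 < sigma x ^ 2) -> ODEH r mu sigma g ->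
  (exists L : R, forall x y : R, Rabs (mu x - mu y) <= L * Rabs (x - y)) ->
  (forall x, 0 < x -> 0 < g x) -> (forall a b, 0 < a -> a < b -> g a < g b) ->
  (forall x, 0 < x -> 0 < Derive g x) ->
  forall M, exists N, forall x, N <= x -> M < g x.
Proof.
intros Hr Hs H [L HL] Pos Inc Dpos.
set (A := Rabs (mu 0) + Rabs L + 1).
assert (HA : 0 < A) by (unfold A; pose proof (Rabs_pos (mu 0)); pose proof (Rabs_pos L); lra).
assert (MuB : forall x, 0 <= x -> mu x <= A * (1+x)).
{ intros x Hx. specialize (HL x 0). replace (x - 0) with x in HL by ring.
  rewrite (Rabs_right x) in HL by lra.
  pose proof (Rle_abs (mu x - mu 0)). pose proof (Rle_abs (mu 0)). pose proof (Rle_abs L).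
  assert (L * x <= Rabs L * x) by (apply Rmult_le_compat_r; lra).
  assert (Rabs L * x <= A * x) by (apply Rmult_le_compat_r; unfold A; pose proof (Rabs_pos (mu 0)); lra).
  assert (A * (1+x) = A + A * x) by ring. assert (Rabs (mu 0) <= A) by (unfold A; pose proof (Rabs_pos L); lra). lra. }
assert (G1 : 0 < g 1) by (apply Pos; lra).
set (c0 := r * g 1).
assert (Hc0 : 0 < c0) by (unfold c0; nra).
set (dl := c0 / (2*A)).
assert (Hdl : 0 < dl) by (unfold dl; apply Rdiv_lt_0_compat; lra).
set (phi := fun y => (1+y) * Derive g y).
assert (Dphi : forall x, 1 <= x -> is_derive phi x (Derive g x + (1+x) * Derive (Derive g) x)).
{ intros x Hx. destruct (H x) as [D1 [D2 _]]; [lra|]. apply dphi; auto. }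
assert (PhiInc : forall x, 1 <= x -> phi x < dl -> 0 < Derive g x + (1+x) * Derive (Derive g) x).
{ intros x Hx Hp. destruct (H x) as [_ [_ [_ E]]]; [lra|].
  assert (Gx : g 1 <= g x) by (destruct (Req_dec x 1) as [->|N]; [lra|]; left; apply Inc; lra).
  assert (S := Hs x ltac:(lra)).
  assert (D := Dpos x ltac:(lra)).
  set (G2 := Derive (Derive g) x) in *. set (G1' := Derive g x) in *.
  assert (mu x * G1' <= A * (1+x) * G1') by (apply Rmult_le_compat_r; [lra| apply MuB; lra]).
  assert (A * ((1+x) * G1') < A * dl) by (apply Rmult_lt_compat_l; [lra| exact Hp]).
  assert (Adl : A * dl = c0 / 2) by (unfold dl; field; lra).
  assert (r * g 1 <= r * g x) by (apply Rmult_le_compat_l; lra).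
  assert (P2 : 0 < / 2 * sigma x ^ 2 * G2) by (unfold c0 in *; nra).
  assert (0 < G2) by (destruct (Rlt_or_le 0 G2); auto; nra).
  nra. }
assert (Phi1 : 0 < phi 1) by (unfold phi; pose proof (Dpos 1 ltac:(lra)); nra).
set (m := Rmin (phi 1) dl).
assert (Hm : 0 < m /\ m <= phi 1 /\ m <= dl) by (unfold m, Rmin; destruct Rle_dec; lra).
assert (PhiLow : forall x, 1 <= x -> m <= phi x).
{ intros x1 Hx1. destruct (Rlt_or_le (phi x1) m) as [N|P]; auto. exfalso.
  destruct (continuity_ab_min phi 1 x1) as [p [Hp Hpi]]; [lra| |].
  { intros c Hc. apply cont_pt_of. eexists. apply Dphi. lra. }
  assert (phi p <= phi x1) by (apply Hp; lra).
  assert (Hp1 : p <> 1) by (intros ->; lra).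
  destruct (deriv_sign _ _ _ (Dphi p ltac:(lra)) (PhiInc p ltac:(lra) ltac:(lra))) as [dd [Hdd Hs']].
  set (s := Rmin dd (p - 1) / 2).
  assert (0 < s < dd /\ s < p - 1) by (unfold s, Rmin; destruct Rle_dec; lra).
  destruct (Hs' s) as [B _]; [lra|].
  assert (phi p <= phi (p - s)) by (apply Hp; lra). lra. }
assert (GLow : forall x, 1 <= x -> m / (1+x) <= Derive g x).
{ intros x Hx. specialize (PhiLow x Hx). unfold phi in PhiLow.
  replace (Derive g x) with ((1+x) * Derive g x * / (1+x)) by (field; lra).
  unfold Rdiv. apply Rmult_le_compat_r; [|exact PhiLow]. left. apply Rinv_0_lt_compat. lra. }
set (h := fun y => g y - m * ln (1+y)).
assert (Hinc : forall b, 1 <= b -> h 1 <= h b).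
{ intros b Hb. destruct (Req_dec b 1) as [->|Nb]; [lra|].
  destruct (MVT_gen h 1 b (fun y => Derive g y - m / (1+y))) as [c [Hc Ec]].
  - intros x Hx. rewrite Rmin_left in Hx by lra. rewrite Rmax_right in Hx by lra.
    apply dh; [lra|]. apply H; lra.
  - intros x Hx. rewrite Rmin_left in Hx by lra. rewrite Rmax_right in Hx by lra.
    apply cont_pt_of. eexists. apply dh; [lra|]. apply H; lra.
  - rewrite Rmin_left in Hc by lra. rewrite Rmax_right in Hc by lra.
    assert (0 <= Derive g c - m / (1+c)) by (pose proof (GLow c ltac:(lra)); lra).
    assert (0 <= (Derive g c - m / (1 + c)) * (b - 1)) by (apply Rmult_le_pos; lra). lra. }
intro M0.
set (K := (Rabs (M0 - h 1) + 1) / m).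
exists (Rmax 1 (exp K)). intros x Hx.
assert (X1 : 1 <= x /\ exp K <= x) by (unfold Rmax in Hx; destruct Rle_dec; pose proof (exp_pos K); lra).
assert (Lx : K < ln (1+x)).
{ rewrite <- (ln_exp K) at 1. apply ln_increasing. apply exp_pos. lra. }
assert (m * K < m * ln (1+x)) by (apply Rmult_lt_compat_l; lra).
assert (m * K = Rabs (M0 - h 1) + 1) by (unfold K; field; lra).
pose proof (Hinc x (proj1 X1)). unfold h in *. pose proof (Rle_abs (M0 - (g 1 - m * ln (1+1)))). lra.
Qed.
Lemma cont_ed f y0 : continuity_pt f y0 -> forall eps, 0<eps -> exists d, 0<d /\ forall y, Rabs (y - y0) < d -> Rabs (f y - f y0) < eps.
Proof.
intros H eps He. apply continuity_pt_filterlim in H.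
pose proof (proj1 (filterlim_locally _ _) H (mkposreal _ He)) as H1.
apply loc_elim in H1. destruct H1 as [d [Hd H1]]. exists d. split; [exact Hd|].
intros y Hy. apply H1. exact Hy.
Qed.

Lemma frac_lt a b c d : 0<b -> 0<d -> a*d < c*b -> a/b < c/d.
Proof.
intros Hb Hd H. replace (a/b) with ((a*d) * /(b*d)) by (field; lra).
replace (c/d) with ((c*b) * /(b*d)) by (field; lra).
apply Rmult_lt_compat_r; auto. apply Rinv_0_lt_compat. nra.
Qed.

Lemma div_lt_r a b c : 0<b -> a < c*b -> a/b < c.
Proof. intros Hb H. replace c with ((c*b)/b) by (field; lra). apply frac_lt; nra. Qed.
Lemma div_gt_r a b c : 0<b -> c*b < a -> c < a/b.
Proof. intros Hb H. replace c with ((c*b)/b) by (field; lra). apply frac_lt; nra. Qed.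

Lemma comp_within (g F : R -> R) lo hi :
  (forall eps, 0<eps -> exists dd, 0<dd /\ forall l, 0<=l -> Rabs(l-lo)<dd -> Rabs (g l - g lo) < eps) ->
  continuity_pt F (g lo) ->
  filterlim (fun l => F (g l)) (within (fun l => 0 <= l /\ l < hi) (locally lo)) (locally (F (g lo))).
Proof.
intros Gw CF. apply filterlim_locally. intros eps.
destruct (cont_ed F (g lo) CF eps (cond_pos eps)) as [d1 [Hd1 H1]].
destruct (Gw d1 Hd1) as [d2 [Hd2 H2]].
unfold within. apply (loc_intro _ _ d2 Hd2). intros l Hl Pl.
apply ball_R. apply H1. apply H2; tauto.
Qed.

Lemma pw_cont (x a : R) (f1 f2 : R -> R) : continuous f1 a -> continuous f2 a -> (a = x -> f1 a = f2 a) ->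
  continuous (fun h => if Rle_dec x h then f1 h else f2 h) a.
Proof.
intros C1 C2 E. unfold continuous. apply filterlim_locally. intros eps.
pose proof (proj1 (filterlim_locally _ _) C1 eps) as H1.
pose proof (proj1 (filterlim_locally _ _) C2 eps) as H2.
apply loc_elim in H1. destruct H1 as [d1 [Hd1 H1]].
apply loc_elim in H2. destruct H2 as [d2 [Hd2 H2]].
destruct (Rtotal_order x a) as [Lt|[Eq|Gt]].
- apply (loc_intro _ _ (Rmin d1 (a - x))). { unfold Rmin; destruct Rle_dec; lra. }
  intros y Hy. assert (Hy1 : Rabs (y - a) < d1) by (unfold Rmin in Hy; destruct Rle_dec; lra).
  assert (Hy2 : Rabs (y - a) < a - x) by (unfold Rmin in Hy; destruct Rle_dec; lra).
  apply Rabs_def2 in Hy2.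
  destruct (Rle_dec x a); [|lra]. destruct (Rle_dec x y); [|lra]. apply H1; exact Hy1.
- subst a. specialize (E eq_refl).
  apply (loc_intro _ _ (Rmin d1 d2)). { unfold Rmin; destruct Rle_dec; lra. }
  intros y Hy. assert (Hy1 : Rabs (y - x) < d1) by (unfold Rmin in Hy; destruct Rle_dec; lra).
  assert (Hy2 : Rabs (y - x) < d2) by (unfold Rmin in Hy; destruct Rle_dec; lra).
  destruct (Rle_dec x x); [|lra]. destruct (Rle_dec x y).
  + apply H1; exact Hy1.
  + rewrite E. apply H2; exact Hy2.
- apply (loc_intro _ _ (Rmin d2 (x - a))). { unfold Rmin; destruct Rle_dec; lra. }
  intros y Hy. assert (Hy1 : Rabs (y - a) < d2) by (unfold Rmin in Hy; destruct Rle_dec; lra).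
  assert (Hy2 : Rabs (y - a) < x - a) by (unfold Rmin in Hy; destruct Rle_dec; lra).
  apply Rabs_def2 in Hy2.
  destruct (Rle_dec x a); [lra|]. destruct (Rle_dec x y); [lra|]. apply H2; exact Hy1.
Qed.
Lemma cg_pt (g : R -> R) x : continuous g x -> continuity_pt g x.
Proof. intro H. apply continuity_pt_filterlim. exact H. Qed.

Lemma main_elem (g : R -> R) :
  g 0 = 0 ->
  (forall x, 0 < x -> 0 < g x) ->
  (forall a b, 0 <= a -> a < b -> g a < g b) ->
  (forall x, 0 < x -> continuous g x) ->
  (forall lo, 0 <= lo -> forall eps, 0<eps -> exists dd, 0<dd /\ forall l, 0<=l -> Rabs(l-lo)<dd -> Rabs (g l - g lo) < eps) ->
  (forall M, exists N, forall x, N <= x -> M < g x) ->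
  (forall x, 0 < x ->
    (forall lo, 0 <= lo ->
       (forall hi, lo < hi -> continuous (fun h => R_barrier g x lo h) hi) /\
       (forall h1 h2, lo < h1 -> h1 < h2 -> (0 < lo \/ x <= h1) ->
          R_barrier g x lo h2 < R_barrier g x lo h1) /\
       is_lim (fun h => R_barrier g x lo h) p_infty 0) /\
    (forall hi, 0 < hi ->
       (forall lo, 0 <= lo -> lo < hi ->
          filterlim (fun l => R_barrier g x l hi)
            (within (fun l => 0 <= l /\ l < hi) (locally lo))
            (locally (R_barrier g x lo hi))) /\
       (forall l1 l2, 0 <= l1 -> l1 < l2 -> l2 < hi ->
          R_barrier g x l1 hi < R_barrier g x l2 hi) /\
       filterlim (fun l => R_barrier g x l hi) (at_left hi)
         (Rbar_locally p_infty))) /\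
  (forall lo, 0 < lo ->
     (forall hi, lo < hi -> continuous (fun h => R_barrier g h lo h) hi) /\
     (forall h1 h2, lo < h1 -> h1 < h2 ->
        R_barrier g h2 lo h2 < R_barrier g h1 lo h1) /\
     is_lim (fun h => R_barrier g h lo h) p_infty 1) /\
  (forall hi, 0 < hi -> R_barrier g hi 0 hi = 1).
Proof.
intros G0 Pos Inc Cg Gw Unb.
assert (Nn : forall x, 0 <= x -> 0 <= g x) by (intros x Hx; destruct (Req_dec x 0) as [->|N]; [lra|]; left; apply Pos; lra).
split; [|split].
- intros x Hx. split.
  + intros lo Hlo. split; [|split].
    * intros hi Hhi. assert (D : 0 < g hi - g lo) by (pose proof (Inc lo hi Hlo Hhi); lra).
      unfold R_barrier. apply pw_cont.
      -- apply continuity_pt_filterlim.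
         apply (continuity_pt_div (fun _ => g x) (fun h => g h - g lo)); [apply continuity_pt_const; intros u v; reflexivity| |lra].
         apply (continuity_pt_minus g (fun _ => g lo)); [apply cg_pt, Cg; lra|apply continuity_pt_const; intros u v; reflexivity].
      -- apply continuity_pt_filterlim.
         apply (continuity_pt_plus (fun _ => 1) (fun h => g lo / (g h - g lo))); [apply continuity_pt_const; intros u v; reflexivity|].
         apply (continuity_pt_div (fun _ => g lo) (fun h => g h - g lo)); [apply continuity_pt_const; intros u v; reflexivity| |lra].
         apply (continuity_pt_minus g (fun _ => g lo)); [apply cg_pt, Cg; lra|apply continuity_pt_const; intros u v; reflexivity].
      -- intros ->. field. lra.
    * intros h1 h2 H1 H2 Hor.
      assert (A1 : g lo < g h1) by (apply Inc; lra).
      assert (A2 : g h1 < g h2) by (apply Inc; lra).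
      unfold R_barrier. destruct (Rle_dec x h1) as [X1|X1]; destruct (Rle_dec x h2) as [X2|X2]; try lra.
      -- apply frac_lt; try lra. pose proof (Pos x Hx). nra.
      -- assert (Hl : 0 < lo) by lra. pose proof (Pos lo Hl).
         assert (g x <= g h2) by (destruct (Req_dec x h2) as [->|N]; [lra|]; left; apply Inc; lra).
         replace (1 + g lo / (g h1 - g lo)) with (g h1 / (g h1 - g lo)) by (field; lra).
         apply frac_lt; try lra. nra.
      -- assert (Hl : 0 < lo) by lra. pose proof (Pos lo Hl).
         apply Rplus_lt_compat_l. apply frac_lt; try lra. nra.
    * apply is_lim_spec. intro eps. pose proof (cond_pos eps) as Heps.
      destruct (Unb (g lo + g x / eps)) as [N HN].
      exists (Rmax (Rmax x lo) N). intros h Hh.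
      assert (Hh' : x < h /\ lo < h /\ N < h) by (unfold Rmax in Hh; repeat destruct Rle_dec; lra).
      assert (Gh := HN h ltac:(lra)).
      assert (Gx := Pos x Hx).
      assert (Q : 0 < g x / eps) by (apply Rdiv_lt_0_compat; lra).
      unfold R_barrier. destruct (Rle_dec x h); [|lra].
      rewrite Rminus_0_r. rewrite Rabs_right.
      2:{ left. apply Rdiv_lt_0_compat; lra. }
      apply div_lt_r; [lra|].
      assert (E : g x = eps * (g x / eps)) by (field; lra).
      assert (eps * (g x / eps) < eps * (g h - g lo)) by (apply Rmult_lt_compat_l; lra). lra.
  + intros hi Hhi. split; [|split].
    * intros lo Hlo Hlh. assert (D : 0 < g hi - g lo) by (pose proof (Inc lo hi Hlo Hlh); lra).
      unfold R_barrier. destruct (Rle_dec x hi).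
      -- refine (comp_within g (fun y => g x / (g hi - y)) lo hi (Gw lo Hlo) _).
         apply (continuity_pt_div (fun _ => g x) (fun y => g hi - y)); [apply continuity_pt_const; intros u v; reflexivity| |simpl; lra].
         apply (continuity_pt_minus (fun _ => g hi) id); [apply continuity_pt_const; intros u v; reflexivity|apply derivable_continuous_pt, derivable_pt_id].
      -- refine (comp_within g (fun y => 1 + y / (g hi - y)) lo hi (Gw lo Hlo) _).
         apply (continuity_pt_plus (fun _ => 1) (fun y => y / (g hi - y))); [apply continuity_pt_const; intros u v; reflexivity|].
         apply (continuity_pt_div id (fun y => g hi - y)); [apply derivable_continuous_pt, derivable_pt_id| |simpl; lra].
         apply (continuity_pt_minus (fun _ => g hi) id); [apply continuity_pt_const; intros u v; reflexivity|apply derivable_continuous_pt, derivable_pt_id].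
    * intros l1 l2 H1 H2 H3.
      assert (A1 : g l1 < g l2) by (apply Inc; lra).
      assert (A2 : g l2 < g hi) by (apply Inc; lra).
      unfold R_barrier. destruct (Rle_dec x hi).
      -- apply frac_lt; try lra. pose proof (Pos x Hx). nra.
      -- apply Rplus_lt_compat_l. apply frac_lt; try lra. pose proof (Pos hi Hhi). nra.
    * intros P [M HM]. unfold filtermap, at_left, within.
      assert (Ghi := Pos hi Hhi). assert (Gx := Pos x Hx).
      set (eta := Rmin (g hi / 2) (Rmin (g x) (g hi / 2) / (Rabs M + 1))).
      assert (HM1 : 0 < Rabs M + 1) by (pose proof (Rabs_pos M); lra).
      assert (Heta : 0 < eta /\ eta <= g hi / 2 /\ eta * (Rabs M + 1) <= g x /\ eta * (Rabs M + 1) <= g hi / 2).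
      { assert (Q : 0 < Rmin (g x) (g hi / 2)) by (unfold Rmin; destruct Rle_dec; lra).
        assert (Q2 : Rmin (g x) (g hi / 2) <= g x /\ Rmin (g x) (g hi / 2) <= g hi / 2) by (unfold Rmin; destruct Rle_dec; lra).
        assert (Q3 : 0 < Rmin (g x) (g hi / 2) / (Rabs M + 1)) by (apply Rdiv_lt_0_compat; lra).
        assert (Q4 : Rmin (g x) (g hi / 2) / (Rabs M + 1) * (Rabs M + 1) = Rmin (g x) (g hi / 2)) by (field; lra).
        assert (Q5 : eta <= Rmin (g x) (g hi / 2) / (Rabs M + 1) /\ eta <= g hi / 2 /\ 0 < eta) by (unfold eta; split; [apply Rmin_r|split; [apply Rmin_l|apply Rmin_glb_lt; lra]]).
        assert (eta * (Rabs M + 1) <= Rmin (g x) (g hi / 2) / (Rabs M + 1) * (Rabs M + 1)) by (apply Rmult_le_compat_r; lra).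
        lra. }
      destruct (cont_ed g hi (cg_pt _ _ (Cg hi Hhi)) eta (proj1 Heta)) as [d [Hd Hc]].
      apply (loc_intro _ _ (Rmin d hi)). { unfold Rmin; destruct Rle_dec; lra. }
      intros l Hl Hlt. apply HM.
      assert (Hl1 : Rabs (l - hi) < d) by (unfold Rmin in Hl; destruct Rle_dec; lra).
      assert (Hl2 : Rabs (l - hi) < hi) by (unfold Rmin in Hl; destruct Rle_dec; lra).
      apply Rabs_def2 in Hl2.
      assert (Gl : g l < g hi) by (apply Inc; lra).
      specialize (Hc l Hl1). apply Rabs_def2 in Hc.
      pose proof (Rle_abs M).
      unfold R_barrier. destruct (Rle_dec x hi).
      -- assert (Rabs M + 1 < g x / (g hi - g l)); [|lra].
         apply div_gt_r; [lra|]. assert ((Rabs M + 1) * (g hi - g l) < (Rabs M + 1) * eta) by (apply Rmult_lt_compat_l; lra). lra.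
      -- assert (Rabs M + 1 < g l / (g hi - g l)); [|lra].
         apply div_gt_r; [lra|]. assert ((Rabs M + 1) * (g hi - g l) < (Rabs M + 1) * eta) by (apply Rmult_lt_compat_l; lra). lra.
- assert (Rdiag : forall lo h, R_barrier g h lo h = g h / (g h - g lo)) by (intros lo h; unfold R_barrier; destruct (Rle_dec h h); [reflexivity|lra]).
  intros lo Hlo. split; [|split].
  + intros hi Hhi. assert (D : 0 < g hi - g lo) by (pose proof (Inc lo hi ltac:(lra) Hhi); lra).
    unfold continuous. rewrite Rdiag. apply (filterlim_ext (fun h => g h / (g h - g lo))).
    { intros h. rewrite Rdiag. reflexivity. }
    apply (proj1 (continuity_pt_filterlim (fun h => g h / (g h - g lo)) hi)).
    apply (continuity_pt_div g (fun h => g h - g lo)); [apply cg_pt, Cg; lra| |lra].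
    apply (continuity_pt_minus g (fun _ => g lo)); [apply cg_pt, Cg; lra|apply continuity_pt_const; intros u v; reflexivity].
  + intros h1 h2 H1 H2. rewrite !Rdiag.
    assert (A1 : g lo < g h1) by (apply Inc; lra).
    assert (A2 : g h1 < g h2) by (apply Inc; lra).
    pose proof (Pos lo Hlo). apply frac_lt; try lra. nra.
  + apply is_lim_spec. intro eps. pose proof (cond_pos eps) as Heps.
    assert (Glo := Pos lo Hlo).
    destruct (Unb (g lo + g lo / eps)) as [N HN].
    exists (Rmax lo N). intros h Hh.
    assert (Hh' : lo < h /\ N < h) by (unfold Rmax in Hh; repeat destruct Rle_dec; lra).
    assert (Gh := HN h ltac:(lra)).
    assert (Q : 0 < g lo / eps) by (apply Rdiv_lt_0_compat; lra).
    rewrite Rdiag.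
    replace (g h / (g h - g lo) - 1) with (g lo / (g h - g lo)) by (field; lra).
    rewrite Rabs_right.
    2:{ left. apply Rdiv_lt_0_compat; lra. }
    apply div_lt_r; [lra|].
    assert (E : g lo = eps * (g lo / eps)) by (field; lra).
    assert (eps * (g lo / eps) < eps * (g h - g lo)) by (apply Rmult_lt_compat_l; lra). lra.
- intros hi Hhi. unfold R_barrier. destruct (Rle_dec hi hi); [|lra].
  rewrite G0. pose proof (Pos hi Hhi). field. lra.
Qed.

Theorem lemma2p5 (r : R) (mu sigma g : R -> R) :
  0 < r ->
  standing_assumptions r mu sigma ->
  canonical_solution r mu sigma g ->
  (* (i) *)
  (forall x, 0 < x ->
    (forall lo, 0 <= lo ->
       (forall hi, lo < hi -> continuous (fun h => R_barrier g x lo h) hi) /\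
       (forall h1 h2, lo < h1 -> h1 < h2 -> (0 < lo \/ x <= h1) ->
          R_barrier g x lo h2 < R_barrier g x lo h1) /\
       is_lim (fun h => R_barrier g x lo h) p_infty 0) /\
    (forall hi, 0 < hi ->
       (forall lo, 0 <= lo -> lo < hi ->
          filterlim (fun l => R_barrier g x l hi)
            (within (fun l => 0 <= l /\ l < hi) (locally lo))
            (locally (R_barrier g x lo hi))) /\
       (forall l1 l2, 0 <= l1 -> l1 < l2 -> l2 < hi ->
          R_barrier g x l1 hi < R_barrier g x l2 hi) /\
       filterlim (fun l => R_barrier g x l hi) (at_left hi)
         (Rbar_locally p_infty))) /\
  (* (ii) *)
  (forall lo, 0 < lo ->
     (forall hi, lo < hi -> continuous (fun h => R_barrier g h lo h) hi) /\
     (forall h1 h2, lo < h1 -> h1 < h2 ->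
        R_barrier g h2 lo h2 < R_barrier g h1 lo h1) /\
     is_lim (fun h => R_barrier g h lo h) p_infty 1) /\
  (forall hi, 0 < hi -> R_barrier g hi 0 hi = 1).
Proof.
intros Hr SA CS.
destruct SA as [_ [_ [_ [_ [Lmu [_ [_ [_ [Hs _]]]]]]]]].
destruct CS as [HODE [G0 [d [Hd Hlim]]]].
assert (H : ODEH r mu sigma g) by exact HODE.
destruct (near0 g d Hd Hlim G0) as [del [Hdel Hn]].
destruct (g_facts r mu sigma g d del Hr Hs H Hd Hdel Hn) as [Pos Inc0].
assert (Inc : forall a b, 0 <= a -> a < b -> g a < g b).
{ intros a b Ha Hab. destruct (Req_dec a 0) as [->|N].
  - rewrite G0. apply Pos. lra.
  - apply Inc0; lra. }
assert (Dp := gprime_pos r mu sigma g Hr Hs H Pos Inc0).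
assert (Unb := g_unbounded r mu sigma g Hr Hs H Lmu Pos Inc0 Dp).
assert (Cg : forall x, 0 < x -> continuous g x).
{ intros x Hx. exact (ex_derive_continuous g x (proj1 (H x Hx))). }
apply main_elem; auto.
intros lo Hlo eps Heps. destruct (Req_dec lo 0) as [->|N].
- set (dd := Rmin del (eps / (2*d))).
  assert (Hdd : 0 < dd /\ dd <= del /\ dd <= eps / (2*d)).
  { unfold dd. split; [apply Rmin_glb_lt; [lra|apply Rdiv_lt_0_compat; lra]|split; [apply Rmin_l|apply Rmin_r]]. }
  exists dd. split; [lra|]. intros l Hl Hld.
  rewrite G0, Rminus_0_r. rewrite Rminus_0_r in Hld.
  destruct (Req_dec l 0) as [->|Nl].
  + rewrite G0, Rabs_R0. exact Heps.
  + rewrite Rabs_right in Hld by lra.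
    destruct (Hn l) as [A B]; [lra|].
    assert (0 < g l) by nra.
    rewrite Rabs_right by lra.
    assert (3*d/2*l <= 3*d/2*(eps/(2*d))) by (apply Rmult_le_compat_l; lra).
    assert (3*d/2*(eps/(2*d)) = 3/4*eps) by (field; lra). lra.
- destruct (cont_ed g lo (cg_pt _ _ (Cg lo ltac:(lra))) eps Heps) as [dd [Hdd Hc]].
  exists dd. split; auto.
Qed.
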